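(* For $n\in\mathbb{N}$ let $\sigma^{(n)}$ be the distribution on $[n]$ with $\sigma^{(n)}_{\le i}=1-(1-\frac in)^2$, and consider the exponential-jump process with choice distribution $\sigma^{(n)}$ in its stationary regime, i.e. with gap vector $(d_1,\dots,d_{n-1})$ distributed according to $\bigotimes_{i=1}^{n-1}\mathrm{Exp}(n\sigma^{(n)}_{\le i}-i)$. Define $g_n(x)=\mathbb{E}\big[t_{\lceil xn\rceil}-t_{\lceil n/2\rceil}\big]$ for $x\in(0,1)$. Then for every $x\in(0,1)$, \[\lim_{n\to\infty}g_n(x)=\log\Big(\frac{x}{1-x}\Big).\]
   Context: The exponential-jump process with choice distribution $\sigma$ on $[n]$: the state consists of $n$ tokens at real positions $t_1<\dots<t_n$; in each step, independently sample $i^*\sim\sigma$ and $X\sim\mathrm{Exp}(1)$, move the $i^*$-th token from the left a distance $X$ to the right, and re-sort. The gaps are $d_i=t_{i+1}-t_i$, so $t_j-t_k=\sum_{i=k}^{j-1}d_i$ for $k\le j$ (and the negative of the corresponding sum for $k>j$). $\mathrm{Exp}(\lambda)$ is the exponential distribution with rate $\lambda$ (mean $1/\lambda$); $\bigotimes$ denotes a product of independent distributions; the product distribution above is the stationary distribution of the gap vector. $\log$ is the natural logarithm. *)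

(* Defs.v *)
From HB Require Import structures.
From mathcomp Require Import all_boot all_order all_algebra.
From mathcomp Require Import all_classical all_reals all_analysis.
Set Implicit Arguments. Unset Strict Implicit. Unset Printing Implicit Defensive.
Import Order.TTheory GRing.Theory Num.Theory.
Import numFieldNormedType.Exports.
Local Open Scope classical_set_scope.
Local Open Scope ring_scope.

Definition sigma_le {R : realType} (n i : nat) : R :=
  1 - (1 - i%:R / n%:R) ^+ 2.

Definition gap_rate {R : realType} (n i : nat) : R :=
  n%:R * sigma_le n i - i%:R.

(* t_j - t_k expressed through the gaps d_i = t_{i+1} - t_i (1-indexed) *)
Definition tdiff {T : Type} {R : realType} (d : nat -> T -> R) (k j : nat)
  : T -> R :=
  fun w => if (k <= j)%N then \sum_(k <= i < j) d i w
           else - \sum_(j <= i < k) d i w.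

Definition mutually_independent {d} {T : measurableType d} {R : realType}
  (P : probability T R) (I : set nat) (X : nat -> {RV P >-> R}) : Prop :=
  forall (J : seq nat), uniq J -> (forall j, j \in J -> I j) ->
  forall B : nat -> set R, (forall j, measurable (B j)) ->
  P (\big[setI/setT]_(j <- J) (X j @^-1` B j)) =
  (\prod_(j <- J) P (X j @^-1` B j))%E.
Arguments mutually_independent {d T R} P I X.

(* Main.v *)
Require Import Defs.
From HB Require Import structures.
From mathcomp Require Import all_boot all_order all_algebra.
From mathcomp Require Import all_classical all_reals all_analysis.
Import Order.TTheory GRing.Theory Num.Theory.
Import numFieldNormedType.Exports.
Local Open Scope classical_set_scope.
Local Open Scope ring_scope.
From mathcomp Require Import ring lra.

Lemma term_bounds (R : realType) (m : R) : 1 <= m ->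
  ln (m + 1) - ln m <= m^-1 <= ln (m + 1) - ln m + (m^-1 - (m + 1)^-1).
Proof.
move=> m1.
have m0 : 0 < m by lra.
have m10 : 0 < m + 1 by lra.
apply/andP; split.
  rewrite -ln_div ?posrE//.
  have -> : (m + 1) / m = 1 + m^-1 by field; lra.
  by apply: le_ln1Dx; have := invr_gt0 m; rewrite m0; lra.
suff : ln m - ln (m + 1) <= - (m + 1)^-1 by lra.
rewrite -ln_div ?posrE//.
have -> : m / (m + 1) = 1 + - (m + 1)^-1 by field; lra.
apply: le_ln1Dx.
rewrite ltrN2 invf_lt1//; lra.
Qed.

Definition cc {R : realType} (n i : nat) : R := i%:R^-1 + (n%:R - i%:R)^-1.
Definition LL {R : realType} (n a b : nat) : R :=
  ln b%:R - ln a%:R + ln (n%:R - a%:R + 1) - ln (n%:R - b%:R + 1).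
Definition EE {R : realType} (n a b : nat) : R :=
  a%:R^-1 - b%:R^-1 + ((n%:R - b%:R + 1)^-1 - (n%:R - a%:R + 1)^-1).

Lemma sum_bounds (R : realType) (n a k : nat) : (1 <= a)%N -> (a + k <= n)%N ->
  LL n a (a + k) <= \sum_(a <= i < a + k) (cc n i : R) <= LL n a (a + k) + EE n a (a + k).
Proof.
move=> a1; elim: k => [|k IH] hk.
  by rewrite addn0 big_geq// /LL /EE; apply/andP; split; lra.
have hk' : (a + k <= n)%N by apply: leq_trans hk; rewrite addnS.
have /andP[IH1 IH2] := IH hk'.
rewrite addnS big_nat_recr/=; last by rewrite leq_addr.
set b := (a + k)%N in hk hk' IH1 IH2 *.
have b1 : (1 <= b)%N by rewrite /b; apply: leq_trans a1 (leq_addr _ _).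
have bn : (b < n)%N by rewrite /b -addnS.
have hb : (1 : R) <= b%:R by rewrite ler1n.
have hnb : (1 : R) <= n%:R - b%:R.
  by rewrite lerBrDr addrC natr1 ler_nat.
have /andP[t1 t2] := term_bounds _ _ hb.
have /andP[u1 u2] := term_bounds _ _ hnb.
have e1 : (b.+1%:R : R) = b%:R + 1 by rewrite -natr1.
have e2 : (n%:R - b.+1%:R + 1 : R) = n%:R - b%:R by rewrite e1; ring.
move: IH1 IH2; rewrite /LL /EE /cc e2 e1.
set s := \sum_(_ <= _ < _) _.
lra.
Qed.

Definition Sg {R : realType} (n k j : nat) : R :=
  if (k <= j)%N then \sum_(k <= i < j) cc n i else - \sum_(j <= i < k) cc n i.

Lemma Sg_bound (R : realType) (n k j : nat) : (1 <= k)%N -> (1 <= j)%N ->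
  (k <= n)%N -> (j <= n)%N ->
  `|Sg n k j - LL n k j| <= k%:R^-1 + j%:R^-1 + (n%:R - k%:R + 1)^-1
                           + (n%:R - j%:R + 1 : R)^-1.
Proof.
move=> k1 j1 kn jn.
have p1 : (0 : R) <= k%:R^-1 by rewrite invr_ge0.
have p2 : (0 : R) <= j%:R^-1 by rewrite invr_ge0.
have hk : (k%:R : R) <= n%:R by rewrite ler_nat.
have hj : (j%:R : R) <= n%:R by rewrite ler_nat.
have p3 : (0 : R) <= (n%:R - k%:R + 1)^-1 by rewrite invr_ge0; lra.
have p4 : (0 : R) <= (n%:R - j%:R + 1)^-1 by rewrite invr_ge0; lra.
have p5 : (0 : R) <= (n%:R - k%:R + 1)^-1 by rewrite invr_ge0; lra.
rewrite /Sg; case: ifPn => [kj|].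
  have := sum_bounds R n k (j - k) k1; rewrite subnKC// => /(_ jn) /andP[h1 h2].
  rewrite ler_norml; apply/andP; split; move: h1 h2; rewrite /EE; lra.
rewrite -ltnNge => /ltnW jk.
have := sum_bounds R n j (k - j) j1; rewrite subnKC// => /(_ kn) /andP[h1 h2].
have -> : LL n k j = - LL n j k :> R by rewrite /LL; ring.
rewrite ler_norml; apply/andP; split; move: h1 h2; rewrite /EE; lra.
Qed.

Lemma ceil_bnd (R : realType) (y : R) : 0 <= y ->
  y <= (`|Num.ceil y|%N)%:R < y + 1.
Proof.
move=> y0.
have c0 : 0 <= Num.ceil y by rewrite ceil_ge0 (lt_le_trans _ y0)// ltrN10.
rewrite natr_absz ger0_norm//.
have /andP[h1 h2] := ceil_itv y.
apply/andP; split => //.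
by move: h1; rewrite intrB /= -ltrBlDr.
Qed.

Lemma invn_cvg0 (R : realType) : (fun n : nat => (n%:R : R)^-1) @ \oo --> 0.
Proof. by rewrite -cvg_shiftS; exact: cvg_harmonic. Qed.

Lemma ratio_cvg (R : realType) (c : R) (m : nat -> nat) :
  (forall n, c * n%:R <= (m n)%:R < c * n%:R + 1) ->
  (fun n => (m n)%:R / (n%:R : R)) @ \oo --> c.
Proof.
move=> hm.
apply: (@squeeze_cvgr _ _ _ _ (fun=> c) (fun n => c + (n%:R : R)^-1)).
- near=> n.
  have n0 : (0 : R) < n%:R by rewrite ltr0n; near: n; exact: nbhs_infty_gt.
  have /andP[h1 h2] := hm n.
  apply/andP; split; first by rewrite ler_pdivlMr.
  rewrite ler_pdivrMr// mulrDl mulVf ?gt_eqF//; exact: ltW.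
- exact: cvg_cst.
- rewrite -[X in _ --> X]addr0; apply: cvgD; first exact: cvg_cst.
  exact: invn_cvg0.
Unshelve. all: by end_near.
Qed.

Lemma Sg_cvg (R : realType) (x : R) : 0 < x < 1 ->
  (fun n => (Sg n (`|Num.ceil (n%:R / 2 : R)|%N) (`|Num.ceil (x * n%:R)|%N) : R))
    @ \oo --> ln (x / (1 - x)).
Proof.
move=> /andP[x0 x1].
set k := fun n : nat => `|Num.ceil (n%:R / 2 : R)|%N.
set j := fun n : nat => `|Num.ceil (x * n%:R)|%N.
rewrite -/(k _) -/(j _).
have hk n : (2 : R)^-1 * n%:R <= (k n)%:R < (2 : R)^-1 * n%:R + 1.
  by rewrite /k (mulrC 2^-1); apply: ceil_bnd; rewrite divr_ge0.
have hj n : x * n%:R <= (j n)%:R < x * n%:R + 1.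
  by rewrite /j; apply: ceil_bnd; rewrite mulr_ge0// ltW.
pose K n := (k n)%:R / (n%:R : R).
pose J n := (j n)%:R / (n%:R : R).
pose h n := (n%:R : R)^-1.
have Kc : K @ \oo --> (2:R)^-1 := @ratio_cvg _ _ _ hk.
have Jc : J @ \oo --> x := @ratio_cvg _ _ _ hj.
have hc : h @ \oo --> 0 := invn_cvg0 R.
pose LE n := ln (J n) - ln (K n) + ln (1 - K n + h n) - ln (1 - J n + h n).
pose BE n := h n * ((K n)^-1 + (J n)^-1 + (1 - K n + h n)^-1 + (1 - J n + h n)^-1).
have K1c : (fun n => 1 - K n + h n) @ \oo --> 1 - (2:R)^-1 + 0.
  by apply: cvgD => //; apply: cvgB => //; exact: cvg_cst.
have J1c : (fun n => 1 - J n + h n) @ \oo --> 1 - x + 0.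
  by apply: cvgD => //; apply: cvgB => //; exact: cvg_cst.
have LEc : LE @ \oo --> ln (x / (1 - x)).
  have -> : ln (x / (1 - x)) = ln x - ln (2:R)^-1 + ln (1 - (2:R)^-1 + 0) - ln (1 - x + 0).
    rewrite !addr0 ln_div ?posrE ?subr_gt0//.
    have -> : (1 - (2:R)^-1 : R) = (2:R)^-1 by field.
    ring.
  apply: cvgB; first apply: cvgD; first apply: cvgB.
  - exact: (continuous_cvg _ (continuous_ln x0) Jc).
  - by apply: (continuous_cvg _ (continuous_ln _) Kc); rewrite invr_gt0.
  - apply: (continuous_cvg _ (continuous_ln _) K1c).
    by rewrite addr0 subr_gt0 invf_lt1// ltr1n.
  - apply: (continuous_cvg _ (continuous_ln _) J1c).
    by rewrite addr0 subr_gt0.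
have BEc : BE @ \oo --> 0.
  rewrite -(mul0r ((2:R)^-1^-1 + x^-1 + (1 - (2:R)^-1 + 0)^-1 + (1 - x + 0)^-1)).
  apply: cvgM => //.
  apply: cvgD; first apply: cvgD; first apply: cvgD.
  - by apply: cvgV => //; rewrite invr_eq0 pnatr_eq0.
  - by apply: cvgV => //; rewrite gt_eqF.
  - by apply: cvgV => //; rewrite addr0 subr_eq0 eq_sym invr_eq1 pnatr_eq1.
  - by apply: cvgV => //; rewrite addr0 subr_eq0 eq_sym lt_eqF.
apply: (@squeeze_cvgr _ _ _ _ (fun n => LE n - BE n) (fun n => LE n + BE n)).
- near=> n.
  have n2 : (2 <= n)%N by near: n; exact: nbhs_infty_ge.
  have nx : (1 - x)^-1 < n%:R by near: n; exact: nbhs_infty_gtr.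
  have n2R : (2:R) <= n%:R by rewrite ler_nat.
  have n0 : (0:R) < n%:R by lra.
  have /andP[hk1 hk2] := hk n.
  have /andP[hj1 hj2] := hj n.
  have nx' : 1 < (1 - x) * n%:R.
    have hx : 0 < 1 - x by rewrite subr_gt0.
    by move: (nx) => nx2; rewrite -(ltr_pM2l hx) mulfV ?gt_eqF in nx2.
  have k1 : (1 <= k n)%N.
    by rewrite -(ltr0n R); apply: lt_le_trans hk1; rewrite mulr_gt0// invr_gt0.
  have j1 : (1 <= j n)%N.
    by rewrite -(ltr0n R); apply: lt_le_trans hj1; rewrite mulr_gt0.
  have kn : (k n < n)%N.
    rewrite -(ltr_nat R); apply: (lt_le_trans hk2); lra.
  have jn : (j n < n)%N.
    rewrite -(ltr_nat R); apply: (lt_le_trans hj2); lra.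
  have := Sg_bound R n (k n) (j n) k1 j1 (ltnW kn) (ltnW jn).
  have knR : ((k n)%:R : R) < n%:R by rewrite ltr_nat.
  have jnR : ((j n)%:R : R) < n%:R by rewrite ltr_nat.
  have k0 : ((k n)%:R : R) != 0 by rewrite pnatr_eq0 -lt0n.
  have j0 : ((j n)%:R : R) != 0 by rewrite pnatr_eq0 -lt0n.
  have kp : (0:R) < (k n)%:R by rewrite ltr0n.
  have jp : (0:R) < (j n)%:R by rewrite ltr0n.
  have nk0 : (0:R) < n%:R - (k n)%:R + 1 by lra.
  have nj0 : (0:R) < n%:R - (j n)%:R + 1 by lra.
  have eLL : LL n (k n) (j n) = LE n.
    have e (y : R) : 0 < y -> ln y = ln (y / n%:R) + ln n%:R.
      by move=> y0; rewrite ln_div ?posrE//; ring.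
    rewrite /LL /LE (e _ kp) (e _ jp) (e _ nk0) (e _ nj0) /K /J /h.
    have -> : (n%:R - (k n)%:R + 1) / n%:R = 1 - (k n)%:R / n%:R + n%:R^-1 :> R.
      by field; rewrite gt_eqF.
    have -> : (n%:R - (j n)%:R + 1) / n%:R = 1 - (j n)%:R / n%:R + n%:R^-1 :> R.
      by field; rewrite gt_eqF.
    ring.
  have eBE : (k n)%:R^-1 + (j n)%:R^-1 + (n%:R - (k n)%:R + 1)^-1 +
      (n%:R - (j n)%:R + 1)^-1 = BE n.
    rewrite /BE /K /J /h.
    have -> : 1 - (k n)%:R / n%:R + n%:R^-1 = (n%:R - (k n)%:R + 1) / n%:R :> R.
      by field; rewrite gt_eqF.
    have -> : 1 - (j n)%:R / n%:R + n%:R^-1 = (n%:R - (j n)%:R + 1) / n%:R :> R.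
      by field; rewrite gt_eqF.
    field; rewrite !gt_eqF//.
  rewrite eLL eBE ler_norml => /andP[h1 h2].
  rewrite -/(k n) -/(j n); apply/andP; split; lra.
- rewrite -[X in _ --> X]subr0; exact: cvgB.
- rewrite -[X in _ --> X]addr0; exact: cvgD.
Unshelve. all: by end_near.
Qed.

Lemma E_sum d (T : measurableType d) (R : realType) (P : probability T R)
  (D : nat -> {RV P >-> R}) (a b : nat) (c : nat -> R) :
  (forall i, (a <= i < b)%N -> (D i : T -> R) \in Lfun P 1 /\ ('E_P[D i] = (c i)%:E)%E) ->
  ((fun w => \sum_(a <= i < b) D i w) \in Lfun P 1) /\
  ('E_P[fun w => (\sum_(a <= i < b) D i w)%R] = (\sum_(a <= i < b) c i)%:E)%E.
Proof.
move=> hD.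
have -> : (fun w => \sum_(a <= i < b) D i w) =
    \sum_(f <- [seq (D i : T -> R) | i <- index_iota a b]) f.
  by rewrite sumrfctE; apply/funext => w; rewrite big_map.
have hL : forall f, f \in [seq (D i : T -> R) | i <- index_iota a b] -> f \in Lfun P 1.
  by move=> f /mapP[i]; rewrite mem_index_iota => /hD[h _] ->.
split.
  by rewrite big_seq; apply: rpred_sum => f /hL.
rewrite expectation_sum// big_map -sumEFin.
apply: eq_big_nat => i hi.
by have [_ ->] := hD i hi.
Qed.

Lemma E_tdiff d (T : measurableType d) (R : realType) (P : probability T R)
  (D : nat -> {RV P >-> R}) (n a b : nat) :
  (forall i, (1 <= i)%N -> (i <= n.-1)%N ->
     (D i : T -> R) \in Lfun P 1 /\ ('E_P[D i] = (cc n i)%:E)%E) ->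
  (1 <= a)%N -> (1 <= b)%N -> (a < n)%N -> (b < n)%N ->
  ('E_P[tdiff (fun i w => D i w) a b] = (Sg n a b)%:E)%E.
Proof.
move=> hD a1 b1 an bn.
have n0 : (0 < n)%N := leq_ltn_trans (leq0n a) an.
rewrite /Sg; case: ifPn => ab.
  have -> : tdiff (fun i w => D i w) a b = fun w => \sum_(a <= i < b) D i w.
    by apply/funext => w; rewrite /tdiff ab.
  have [|//] := @E_sum _ _ _ P D a b (fun i => cc n i) => i /andP[ai ib].
  apply: hD; first exact: leq_trans ai.
  by rewrite -ltnS prednK // (ltn_trans ib bn).
have -> : tdiff (fun i w => D i w) a b = (-1) \o* (fun w => \sum_(b <= i < a) D i w).
  by apply/funext => w; rewrite /tdiff (negbTE ab) /= mulrN1.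
have [|hL hE] := @E_sum _ _ _ P D b a (fun i => cc n i).
  move=> i /andP[bi ia]; apply: hD; first exact: leq_trans bi.
  by rewrite -ltnS prednK // (ltn_trans ia an).
by rewrite expectationZl// hE -EFinM mulN1r.
Qed.

Section prob.
Local Open Scope ereal_scope.
Lemma tail_pdf (R : realType) (l r : R) : (0 < l)%R -> (0 <= r)%R ->
  \int[lebesgue_measure]_(x in `[r, +oo[) (exponential_pdf l x)%:E
  = (expR (- l * r))%:E.
Proof.
move=> l0 r0.
have cexpNM : continuous (fun z : R^o => expR (- l * z)).
  move=> z; apply: continuous_comp; last exact: continuous_expR.
  by apply: continuousM => //; apply: (@continuousN _ R^o); exact: cst_continuous.
rewrite (@ge0_continuous_FTC2y _ _ (fun x => - (expR (- l * x)))%R r 0%R)//.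
- by rewrite sub0e EFinN oppeK.
- by move=> x _; apply: exponential_pdf_ge0; exact: ltW.
- apply: (@continuous_subspaceW R^o _ _ [set` `[0, +oo[%R]).
    by apply: subset_itvr; rewrite bnd_simp.
  exact: within_continuous_exponential_pdf.
- rewrite -oppr0; apply: cvgN.
  rewrite (_ : (fun x => expR (- l * x))%R =
               (fun z => expR (- z))%R \o (fun z => l * z)%R); last first.
    by apply: eq_fun => x; rewrite mulNr.
  apply: (@cvg_comp _ _ _ _ _ _ (pinfty_nbhs R)); last exact: cvgr_expR.
  exact: gt0_cvgMry.

- by apply: cvgN; apply/cvg_at_right_filter; exact: cexpNM.
- move=> z; rewrite in_itv/= andbT => rz.
  by apply: derive1_exponential_pdf; rewrite in_itv/= andbT (le_lt_trans r0 rz).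
Qed.

Lemma exp_tail (R : realType) (l r : R) : (0 < l)%R -> (0 <= r)%R ->
  exponential_prob l `]r, +oo[%classic = (expR (- l * r))%:E.
Proof.
move=> l0 r0; rewrite /exponential_prob integral_itv_obnd_cbnd ?tail_pdf//.
apply/measurable_realfun.measurable_EFinP; apply: measurable_funTS.
exact: measurable_exponential_pdf.
Qed.

Lemma exp_neg (R : realType) (l r : R) : (0 <= r)%R ->
  exponential_prob l `]-oo, (- r)%R[%classic = 0.
Proof.
move=> r0; rewrite /exponential_prob integral0_eq// => x.
rewrite /= in_itv/= => xr; rewrite lt0_exponential_pdf//.
by rewrite (lt_le_trans xr)// oppr_le0.
Qed.

Definition rvpos {d} {T : measurableType d} {R : realType} {P : probability T R}
  (X : {RV P >-> R}) : {RV P >-> R} := measurable_realfun.max_mfun X (cst 0%R).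
Definition rvneg {d} {T : measurableType d} {R : realType} {P : probability T R}
  (X : {RV P >-> R}) : {RV P >-> R} :=
  measurable_realfun.max_mfun (measurable_realfun.scale_mfun (-1)%R X) (cst 0%R).
Lemma rvposE {d} {T : measurableType d} {R : realType} {P : probability T R}
  (X : {RV P >-> R}) : (rvpos X : T -> R) = X^\+%R.
Proof. by []. Qed.
Lemma rvnegE {d} {T : measurableType d} {R : realType} {P : probability T R}
  (X : {RV P >-> R}) : (rvneg X : T -> R) = X^\-%R.
Proof. by apply/funext => x /=; rewrite /funrneg /= mulrN1. Qed.

Lemma exp_mean d (T : measurableType d) (R : realType) (P : probability T R)
  (X : {RV P >-> R}) (l : R) : (0 < l)%R ->
  (forall A, measurable A -> distribution P X A = exponential_prob l A) ->
  (X : T -> R) \in Lfun P 1 /\ 'E_P[X] = (l^-1)%:E.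
Proof.
move=> l0 hX.
have Ptail r : (0 <= r)%R -> P (X @^-1` `]r, +oo[) = (expR (- l * r))%:E.
  by move=> r0; rewrite -exp_tail// -hX.
have Pneg r : (0 <= r)%R -> P (X @^-1` `]-oo, (- r)%R[) = 0.
  by move=> r0; rewrite -(@exp_neg _ l r r0) -hX.
have Epos : 'E_P[rvpos X] = (l^-1)%:E.
  rewrite (@ge0_expectation_ccdf _ _ _ P (rvpos X)); last by move=> ?; rewrite rvposE; exact: funrpos_ge0.
  transitivity (\int[lebesgue_measure]_(r in `[0%R, +oo[)
                  ((l^-1)%:E * (exponential_pdf l r)%:E)).
    apply: eq_integral => r; rewrite inE /= in_itv /= andbT => r0.
    rewrite /ccdf /distribution /pushforward.
    have -> : (rvpos X @^-1` `]r, +oo[) = X @^-1` `]r, +oo[.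
      rewrite rvposE.
      apply/seteqP; split => w /=; rewrite !in_itv/= !andbT.
        by rewrite /funrpos lt_max (ltNge r 0%R) r0 orbF.
      by move=> h; rewrite /funrpos lt_max h.
    by rewrite Ptail// exponential_pdfE// -EFinM mulrA mulVf ?gt_eqF// mul1r.
  rewrite ge0_integralZl//=; last 3 first.
  - apply/measurable_realfun.measurable_EFinP; apply: measurable_funTS.
    exact: measurable_exponential_pdf.
  - by move=> x _; rewrite lee_fin exponential_pdf_ge0// ltW.
  - by rewrite lee_fin invr_ge0 ltW.
  by rewrite tail_pdf// mulr0 expR0 mule1.
have Eneg : 'E_P[rvneg X] = 0.
  rewrite (@ge0_expectation_ccdf _ _ _ P (rvneg X)); last by move=> ?; rewrite rvnegE; exact: funrneg_ge0.
  apply: integral0_eq => r; rewrite /= in_itv /= andbT => r0.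
  rewrite /ccdf /distribution /pushforward.
  have -> : (rvneg X @^-1` `]r, +oo[) = X @^-1` `]-oo, (- r)%R[.
    rewrite rvnegE.
    apply/seteqP; split => w /=; rewrite !in_itv/= ?andbT.
      by rewrite /funrneg lt_max (ltNge r 0%R) r0 orbF ltrNr.
    by move=> h; rewrite /funrneg lt_max ltrNr h.
  exact: Pneg.
have Lpos (Y : {RV P >-> R}) : (forall w, 0 <= Y w)%R -> 'E_P[Y] \is a fin_num ->
    (Y : T -> R) \in Lfun P 1.
  move=> Y0 Yfin; apply/Lfun1_integrable/integrableP; split.
    by apply/measurable_realfun.measurable_EFinP.
  under eq_integral do rewrite /= ger0_norm ?Y0//.
  by rewrite -expectation_def ltey_eq Yfin.
have L1 : (rvpos X : T -> R) \in Lfun P 1.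
  by apply: Lpos; [move=> ?; rewrite rvposE; exact: funrpos_ge0|rewrite Epos].
have L2 : (rvneg X : T -> R) \in Lfun P 1.
  by apply: Lpos; [move=> ?; rewrite rvnegE; exact: funrneg_ge0|rewrite Eneg].
rewrite -(funrposBneg X) -rvposE -rvnegE; split; first exact: rpredB.
by rewrite expectationB// Epos Eneg sube0.
Qed.

End prob.

Lemma gap_rate_inv (R : realType) (n i : nat) : (1 <= i)%N -> (i < n)%N ->
  0 < (gap_rate n i : R) /\ (gap_rate n i : R)^-1 = cc n i.
Proof.
move=> i1 iN.
have n0 : (0 : R) < n%:R by rewrite ltr0n (leq_ltn_trans (leq0n i)).
have i0 : (0 : R) < i%:R by rewrite ltr0n.
have ni : (0 : R) < n%:R - i%:R by rewrite subr_gt0 ltr_nat.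
have e : (gap_rate n i : R) = i%:R * (n%:R - i%:R) / n%:R.
  by rewrite /gap_rate /sigma_le; field; rewrite gt_eqF.
rewrite e; split; first by rewrite divr_gt0// mulr_gt0.
by rewrite /cc; field; rewrite !gt_eqF.
Qed.

Lemma idx_ok (R : realType) (x : R) : 0 < x < 1 ->
  \forall n \near \oo,
    [/\ (1 <= `|Num.ceil (n%:R / 2 : R)|%N)%N, (1 <= `|Num.ceil (x * n%:R)|%N)%N,
        (`|Num.ceil (n%:R / 2 : R)|%N < n)%N & (`|Num.ceil (x * n%:R)|%N < n)%N].
Proof.
move=> /andP[x0 x1].
set k := fun n : nat => `|Num.ceil (n%:R / 2 : R)|%N.
set j := fun n : nat => `|Num.ceil (x * n%:R)|%N.
have hk n : (2 : R)^-1 * n%:R <= (k n)%:R < (2 : R)^-1 * n%:R + 1.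
  by rewrite /k (mulrC 2^-1); apply: ceil_bnd; rewrite divr_ge0.
have hj n : x * n%:R <= (j n)%:R < x * n%:R + 1.
  by rewrite /j; apply: ceil_bnd; rewrite mulr_ge0// ltW.
near=> n.
have n2 : (2 <= n)%N by near: n; exact: nbhs_infty_ge.
have nx : (1 - x)^-1 < n%:R by near: n; exact: nbhs_infty_gtr.
have n2R : (2:R) <= n%:R by rewrite ler_nat.
have n0 : (0:R) < n%:R by lra.
have /andP[hk1 hk2] := hk n.
have /andP[hj1 hj2] := hj n.
have nx' : 1 < (1 - x) * n%:R.
  have hx : 0 < 1 - x by rewrite subr_gt0.
  by move: (nx) => nx2; rewrite -(ltr_pM2l hx) mulfV ?gt_eqF in nx2.
rewrite -/(k n) -/(j n); split.
- by rewrite -(ltr0n R); apply: lt_le_trans hk1; rewrite mulr_gt0// invr_gt0.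
- by rewrite -(ltr0n R); apply: lt_le_trans hj1; rewrite mulr_gt0.
- rewrite -(ltr_nat R); apply: (lt_le_trans hk2); lra.
- rewrite -(ltr_nat R); apply: (lt_le_trans hj2); lra.
Unshelve. all: by end_near.
Qed.

Theorem corollary13 (R : realType) (dsp : measure_display)
  (T : nat -> measurableType dsp) (P : forall n, probability (T n) R)
  (D : forall n, nat -> {RV (P n) >-> R}) :
  (forall n i, (1 <= i)%N -> (i <= n.-1)%N ->
     forall A : set R, measurable A ->
     distribution (P n) (D n i) A = exponential_prob (gap_rate n i) A) ->
  (forall n, mutually_independent (P n) [set i | (1 <= i)%N /\ (i <= n.-1)%N]
                                  (D n)) ->
  forall x : R, 0 < x < 1 ->
  (fun n : nat =>
     ('E_(P n)[tdiff (fun i w => D n i w)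
                    `|Num.ceil (n%:R / 2 : R)|%N `|Num.ceil (x * n%:R)|%N])%E)
    @ \oo --> (ln (x / (1 - x)))%:E.
Proof.
move=> hdist _ x x01.
have hE n : (0 < n)%N -> forall i, (1 <= i)%N -> (i <= n.-1)%N ->
    (D n i : T n -> R) \in Lfun (P n) 1 /\ ('E_(P n)[D n i] = (cc n i)%:E)%E.
  move=> n0 i i1 iN.
  have iN' : (i < n)%N by rewrite -ltnS prednK in iN.
  have [g0 ginv] := gap_rate_inv R n i i1 iN'.
  have [L E] := @exp_mean _ _ _ (P n) (D n i) (gap_rate n i) g0 (hdist n i i1 iN).
  by rewrite -ginv.
have HE : \forall n \near \oo,
    ('E_(P n)[tdiff (fun i w => D n i w)
                    `|Num.ceil (n%:R / 2 : R)|%N `|Num.ceil (x * n%:R)|%N])%E =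
    (Sg n `|Num.ceil (n%:R / 2 : R)|%N `|Num.ceil (x * n%:R)|%N)%:E.
  near=> n.
  have [k1 j1 kn jn] : [/\ (1 <= `|Num.ceil (n%:R / 2 : R)|%N)%N,
      (1 <= `|Num.ceil (x * n%:R)|%N)%N,
      (`|Num.ceil (n%:R / 2 : R)|%N < n)%N & (`|Num.ceil (x * n%:R)|%N < n)%N].
    by near: n; exact: idx_ok.
  apply: E_tdiff => //.
  by apply: hE; exact: leq_ltn_trans kn.
apply: cvg_EFin.
  by near=> n; rewrite (near HE n).
apply: cvg_trans (Sg_cvg _ _ x01).
apply: near_eq_cvg; near=> n.
by rewrite /= (near HE n).
Unshelve. all: by end_near.
Qed.
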